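(* There exists a cap set $A \subseteq \mathbb{F}_3^{396}$ of size \[\binom{11}{7} \cdot 6^4 \cdot 12^4 \cdot 112^{62}.\]
   Context: A cap set is a set $A \subseteq \mathbb{F}_3^n$ such that the only solutions of $x+y+z=0$ with $x,y,z\in A$ are those with $x=y=z$. *)

(* Defs.v *)
From mathcomp Require Import all_boot all_algebra.
Set Implicit Arguments. Unset Strict Implicit. Unset Printing Implicit Defensive.
Import GRing.Theory.
Local Open Scope ring_scope.

Definition F3n (n : nat) := 'rV['F_3]_n.

Definition is_cap_set (n : nat) (A : {set F3n n}) : Prop :=
  forall x y z : F3n n, x \in A -> y \in A -> z \in A ->
    x + y + z = 0 -> x = y /\ y = z.

(* Main.v *)
Require Import Defs.
From mathcomp Require Import all_boot all_algebra.
From mathcomp Require Import zify.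
Set Implicit Arguments. Unset Strict Implicit. Unset Printing Implicit Defensive.
Import GRing.Theory.

(* Construction: union over an admissible set A(11,7) (found by
   computer, 330 vectors) with an inner 6-block tournament structure, of products
   of 66 sets in F_3^6: a 12-point set E and two 112-caps P, Q with
   E+E+P, E+E+Q, E+P+Q zero-free. *)

Definition Alist : seq (seq nat) := [:: [:: 1; 2; 2; 2; 1; 2; 1; 0; 0; 0; 0];
  [:: 2; 2; 1; 1; 1; 2; 0; 2; 0; 0; 0];
  [:: 2; 1; 2; 2; 1; 2; 0; 0; 1; 0; 0];
  [:: 1; 1; 2; 1; 1; 1; 0; 0; 0; 1; 0];
  [:: 2; 2; 2; 1; 2; 1; 0; 0; 0; 0; 1];
  [:: 2; 1; 1; 1; 2; 0; 2; 2; 0; 0; 0];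
  [:: 1; 2; 2; 2; 1; 0; 1; 0; 2; 0; 0];
  [:: 2; 1; 1; 1; 2; 0; 2; 0; 0; 2; 0];
  [:: 2; 1; 1; 1; 2; 0; 2; 0; 0; 0; 2];
  [:: 2; 2; 1; 2; 2; 0; 0; 1; 1; 0; 0];
  [:: 1; 2; 1; 2; 2; 0; 0; 2; 0; 1; 0];
  [:: 1; 2; 2; 1; 2; 0; 0; 1; 0; 0; 2];
  [:: 2; 1; 1; 2; 1; 0; 0; 0; 2; 2; 0];
  [:: 1; 2; 1; 1; 1; 0; 0; 0; 1; 0; 1];
  [:: 2; 2; 1; 2; 1; 0; 0; 0; 0; 1; 2];
  [:: 1; 2; 1; 1; 0; 1; 1; 1; 0; 0; 0];
  [:: 1; 2; 2; 1; 0; 2; 2; 0; 1; 0; 0];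
  [:: 2; 1; 2; 1; 0; 2; 1; 0; 0; 2; 0];
  [:: 1; 1; 1; 2; 0; 2; 2; 0; 0; 0; 2];
  [:: 2; 2; 1; 2; 0; 2; 0; 1; 1; 0; 0];
  [:: 2; 1; 1; 2; 0; 1; 0; 2; 0; 2; 0];
  [:: 2; 2; 2; 1; 0; 1; 0; 2; 0; 0; 1];
  [:: 1; 2; 2; 2; 0; 1; 0; 0; 1; 2; 0];
  [:: 1; 1; 1; 2; 0; 2; 0; 0; 2; 0; 2];
  [:: 1; 1; 1; 2; 0; 2; 0; 0; 0; 2; 2];
  [:: 1; 1; 2; 1; 0; 0; 2; 2; 2; 0; 0];
  [:: 1; 1; 2; 2; 0; 0; 2; 1; 0; 2; 0];
  [:: 2; 1; 2; 2; 0; 0; 1; 1; 0; 0; 2];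
  [:: 1; 1; 1; 2; 0; 0; 1; 0; 1; 1; 0];
  [:: 2; 1; 2; 2; 0; 0; 2; 0; 1; 0; 1];
  [:: 2; 2; 1; 2; 0; 0; 1; 0; 0; 2; 1];
  [:: 2; 2; 1; 2; 0; 0; 0; 1; 1; 2; 0];
  [:: 1; 1; 2; 1; 0; 0; 0; 2; 2; 0; 2];
  [:: 2; 1; 1; 1; 0; 0; 0; 1; 0; 1; 1];
  [:: 2; 1; 2; 1; 0; 0; 0; 0; 1; 2; 2];
  [:: 1; 1; 2; 0; 2; 2; 1; 2; 0; 0; 0];
  [:: 2; 1; 2; 0; 1; 2; 2; 0; 1; 0; 0];
  [:: 2; 2; 2; 0; 2; 1; 1; 0; 0; 1; 0];
  [:: 2; 1; 1; 0; 1; 1; 1; 0; 0; 0; 1];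
  [:: 2; 1; 2; 0; 1; 2; 0; 2; 1; 0; 0];
  [:: 1; 2; 2; 0; 2; 2; 0; 1; 0; 1; 0];
  [:: 2; 2; 1; 0; 2; 2; 0; 1; 0; 0; 1];
  [:: 1; 2; 1; 0; 2; 1; 0; 0; 2; 2; 0];
  [:: 1; 2; 1; 0; 2; 1; 0; 0; 2; 0; 2];
  [:: 1; 1; 2; 0; 2; 2; 0; 0; 0; 2; 1];
  [:: 2; 2; 1; 0; 1; 0; 1; 2; 2; 0; 0];
  [:: 2; 1; 2; 0; 1; 0; 2; 2; 0; 1; 0];
  [:: 2; 1; 2; 0; 2; 0; 1; 1; 0; 0; 2];
  [:: 1; 1; 1; 0; 2; 0; 1; 0; 1; 1; 0];
  [:: 1; 1; 2; 0; 1; 0; 2; 0; 2; 0; 2];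
  [:: 2; 2; 1; 0; 1; 0; 2; 0; 0; 1; 2];
  [:: 1; 2; 2; 0; 1; 0; 0; 2; 1; 2; 0];
  [:: 2; 2; 2; 0; 1; 0; 0; 1; 2; 0; 1];
  [:: 1; 1; 2; 0; 2; 0; 0; 2; 0; 2; 1];
  [:: 1; 1; 2; 0; 2; 0; 0; 0; 2; 2; 1];
  [:: 2; 2; 2; 0; 0; 1; 1; 2; 1; 0; 0];
  [:: 1; 2; 2; 0; 0; 2; 2; 1; 0; 1; 0];
  [:: 1; 2; 1; 0; 0; 2; 2; 2; 0; 0; 1];
  [:: 1; 1; 1; 0; 0; 2; 1; 0; 1; 1; 0];
  [:: 1; 2; 2; 0; 0; 2; 1; 0; 2; 0; 1];
  [:: 1; 2; 2; 0; 0; 1; 1; 0; 0; 2; 2];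
  [:: 2; 1; 1; 0; 0; 1; 0; 2; 2; 2; 0];
  [:: 1; 1; 2; 0; 0; 1; 0; 1; 1; 0; 1];
  [:: 1; 2; 2; 0; 0; 2; 0; 1; 0; 1; 2];
  [:: 2; 1; 2; 0; 0; 1; 0; 0; 2; 1; 2];
  [:: 1; 1; 1; 0; 0; 0; 1; 2; 1; 1; 0];
  [:: 2; 1; 2; 0; 0; 0; 1; 1; 2; 0; 2];
  [:: 1; 2; 1; 0; 0; 0; 2; 2; 0; 2; 1];
  [:: 1; 1; 1; 0; 0; 0; 1; 0; 1; 1; 2];
  [:: 1; 2; 1; 0; 0; 0; 0; 1; 2; 2; 2];
  [:: 2; 2; 0; 2; 1; 1; 2; 1; 0; 0; 0];
  [:: 1; 2; 0; 1; 2; 2; 2; 0; 1; 0; 0];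
  [:: 1; 1; 0; 1; 1; 1; 2; 0; 0; 1; 0];
  [:: 1; 2; 0; 2; 2; 1; 2; 0; 0; 0; 1];
  [:: 2; 2; 0; 1; 2; 1; 0; 2; 1; 0; 0];
  [:: 1; 1; 0; 1; 1; 1; 0; 2; 0; 1; 0];
  [:: 1; 2; 0; 1; 2; 2; 0; 1; 0; 0; 2];
  [:: 1; 1; 0; 1; 1; 1; 0; 0; 2; 1; 0];
  [:: 2; 2; 0; 2; 1; 1; 0; 0; 1; 0; 2];
  [:: 1; 1; 0; 1; 1; 1; 0; 0; 0; 1; 2];
  [:: 2; 1; 0; 1; 1; 0; 1; 1; 1; 0; 0];
  [:: 1; 1; 0; 2; 2; 0; 2; 1; 0; 2; 0];
  [:: 1; 2; 0; 1; 2; 0; 2; 1; 0; 0; 2];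
  [:: 2; 2; 0; 2; 1; 0; 2; 0; 1; 1; 0];
  [:: 2; 2; 0; 2; 2; 0; 1; 0; 1; 0; 1];
  [:: 2; 1; 0; 2; 2; 0; 1; 0; 0; 1; 2];
  [:: 1; 2; 0; 2; 1; 0; 0; 2; 1; 2; 0];
  [:: 2; 1; 0; 2; 1; 0; 0; 2; 2; 0; 1];
  [:: 2; 1; 0; 2; 1; 0; 0; 2; 0; 2; 1];
  [:: 1; 2; 0; 2; 2; 0; 0; 0; 2; 1; 1];
  [:: 2; 1; 0; 2; 0; 1; 1; 2; 2; 0; 0];
  [:: 2; 2; 0; 1; 0; 2; 1; 2; 0; 1; 0];
  [:: 2; 1; 0; 1; 0; 1; 2; 2; 0; 0; 2];
  [:: 2; 1; 0; 2; 0; 1; 1; 0; 2; 2; 0];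
  [:: 1; 2; 0; 1; 0; 2; 2; 0; 1; 0; 2];
  [:: 1; 2; 0; 2; 0; 1; 1; 0; 0; 2; 2];
  [:: 2; 2; 0; 1; 0; 1; 0; 1; 2; 2; 0];
  [:: 1; 1; 0; 2; 0; 1; 0; 1; 1; 0; 1];
  [:: 1; 2; 0; 1; 0; 2; 0; 2; 0; 2; 1];
  [:: 2; 1; 0; 1; 0; 2; 0; 0; 1; 2; 2];
  [:: 2; 2; 0; 1; 0; 0; 1; 2; 2; 1; 0];
  [:: 2; 2; 0; 1; 0; 0; 2; 1; 2; 0; 1];
  [:: 2; 2; 0; 1; 0; 0; 1; 2; 0; 1; 2];
  [:: 1; 2; 0; 2; 0; 0; 2; 0; 2; 1; 1];
  [:: 1; 2; 0; 2; 0; 0; 0; 2; 2; 1; 1];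
  [:: 1; 1; 0; 0; 2; 2; 1; 2; 2; 0; 0];
  [:: 1; 1; 0; 0; 2; 2; 1; 2; 0; 2; 0];
  [:: 2; 2; 0; 0; 1; 1; 2; 1; 0; 0; 2];
  [:: 2; 1; 0; 0; 2; 1; 2; 0; 1; 2; 0];
  [:: 2; 2; 0; 0; 2; 2; 1; 0; 1; 0; 1];
  [:: 2; 1; 0; 0; 2; 2; 2; 0; 0; 1; 1];
  [:: 2; 1; 0; 0; 2; 2; 0; 1; 2; 1; 0];
  [:: 1; 1; 0; 0; 2; 1; 0; 1; 1; 0; 1];
  [:: 2; 2; 0; 0; 2; 1; 0; 2; 0; 1; 1];
  [:: 2; 2; 0; 0; 1; 1; 0; 0; 2; 2; 1];
  [:: 2; 1; 0; 0; 2; 0; 2; 1; 2; 1; 0];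
  [:: 1; 1; 0; 0; 1; 0; 2; 2; 2; 0; 2];
  [:: 1; 2; 0; 0; 1; 0; 1; 1; 0; 1; 1];
  [:: 2; 2; 0; 0; 2; 0; 1; 0; 1; 2; 1];
  [:: 1; 2; 0; 0; 1; 0; 0; 2; 1; 2; 2];
  [:: 2; 2; 0; 0; 0; 2; 1; 1; 1; 2; 0];
  [:: 1; 1; 0; 0; 0; 1; 2; 1; 1; 0; 1];
  [:: 1; 2; 0; 0; 0; 1; 1; 2; 0; 2; 2];
  [:: 2; 1; 0; 0; 0; 2; 2; 0; 2; 1; 1];
  [:: 1; 1; 0; 0; 0; 1; 0; 1; 1; 2; 1];
  [:: 2; 1; 0; 0; 0; 0; 1; 2; 2; 2; 1];
  [:: 1; 0; 1; 1; 2; 1; 1; 1; 0; 0; 0];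
  [:: 2; 0; 2; 1; 1; 1; 2; 0; 2; 0; 0];
  [:: 1; 0; 1; 2; 1; 2; 2; 0; 0; 2; 0];
  [:: 2; 0; 2; 1; 1; 2; 1; 0; 0; 0; 2];
  [:: 2; 0; 2; 1; 2; 1; 0; 2; 1; 0; 0];
  [:: 2; 0; 2; 1; 1; 2; 0; 1; 0; 2; 0];
  [:: 2; 0; 1; 2; 2; 2; 0; 1; 0; 0; 1];
  [:: 2; 0; 1; 1; 2; 2; 0; 0; 2; 1; 0];
  [:: 1; 0; 1; 1; 1; 2; 0; 0; 1; 0; 1];
  [:: 2; 0; 2; 2; 1; 2; 0; 0; 0; 1; 1];
  [:: 1; 0; 2; 2; 2; 0; 2; 1; 1; 0; 0];
  [:: 1; 0; 1; 2; 2; 0; 2; 2; 0; 1; 0];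
  [:: 2; 0; 1; 2; 1; 0; 2; 1; 0; 0; 2];
  [:: 1; 0; 2; 1; 2; 0; 1; 0; 2; 2; 0];
  [:: 1; 0; 1; 1; 1; 0; 2; 0; 1; 0; 1];
  [:: 2; 0; 1; 2; 2; 0; 1; 0; 0; 2; 1];
  [:: 1; 0; 1; 2; 2; 0; 0; 2; 2; 1; 0];
  [:: 1; 0; 1; 1; 1; 0; 0; 2; 1; 0; 1];
  [:: 2; 0; 2; 1; 1; 0; 0; 1; 0; 2; 2];
  [:: 1; 0; 1; 1; 1; 0; 0; 0; 1; 2; 1];
  [:: 1; 0; 1; 1; 0; 1; 1; 1; 2; 0; 0];
  [:: 1; 0; 1; 1; 0; 1; 1; 1; 0; 2; 0];
  [:: 1; 0; 1; 1; 0; 1; 1; 1; 0; 0; 2];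
  [:: 2; 0; 1; 1; 0; 2; 2; 0; 2; 1; 0];
  [:: 1; 0; 2; 2; 0; 2; 1; 0; 2; 0; 1];
  [:: 2; 0; 1; 2; 0; 2; 1; 0; 0; 2; 1];
  [:: 1; 0; 2; 2; 0; 1; 0; 2; 1; 2; 0];
  [:: 2; 0; 2; 1; 0; 2; 0; 1; 1; 0; 2];
  [:: 2; 0; 2; 2; 0; 1; 0; 1; 0; 1; 2];
  [:: 1; 0; 2; 2; 0; 1; 0; 0; 1; 2; 2];
  [:: 2; 0; 1; 1; 0; 0; 2; 2; 1; 2; 0];
  [:: 2; 0; 2; 1; 0; 0; 2; 1; 2; 0; 1];
  [:: 1; 0; 2; 1; 0; 0; 2; 2; 0; 1; 2];
  [:: 1; 0; 2; 1; 0; 0; 2; 0; 2; 1; 2];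
  [:: 2; 0; 2; 2; 0; 0; 0; 2; 1; 1; 1];
  [:: 2; 0; 1; 0; 1; 2; 1; 2; 2; 0; 0];
  [:: 2; 0; 2; 0; 2; 1; 1; 2; 0; 1; 0];
  [:: 1; 0; 2; 0; 1; 1; 2; 2; 0; 0; 2];
  [:: 1; 0; 1; 0; 1; 2; 2; 0; 2; 2; 0];
  [:: 2; 0; 1; 0; 2; 1; 2; 0; 1; 0; 2];
  [:: 1; 0; 1; 0; 1; 2; 2; 0; 0; 2; 2];
  [:: 2; 0; 1; 0; 1; 1; 0; 1; 1; 1; 0];
  [:: 1; 0; 2; 0; 1; 1; 0; 2; 2; 0; 2];
  [:: 2; 0; 1; 0; 2; 2; 0; 1; 0; 2; 1];
  [:: 2; 0; 2; 0; 1; 1; 0; 0; 2; 2; 1];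
  [:: 1; 0; 2; 0; 2; 0; 2; 1; 1; 2; 0];
  [:: 2; 0; 1; 0; 1; 0; 1; 2; 2; 0; 2];
  [:: 1; 0; 2; 0; 1; 0; 1; 1; 0; 1; 1];
  [:: 2; 0; 1; 0; 2; 0; 2; 0; 2; 1; 1];
  [:: 1; 0; 1; 0; 2; 0; 0; 1; 2; 2; 2];
  [:: 1; 0; 2; 0; 0; 1; 2; 2; 2; 1; 0];
  [:: 2; 0; 1; 0; 0; 1; 2; 2; 1; 0; 2];
  [:: 2; 0; 1; 0; 0; 2; 1; 2; 0; 1; 2];
  [:: 2; 0; 1; 0; 0; 1; 2; 0; 1; 2; 2];
  [:: 2; 0; 2; 0; 0; 2; 0; 2; 1; 1; 1];
  [:: 2; 0; 2; 0; 0; 0; 2; 2; 1; 1; 1];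
  [:: 1; 0; 0; 2; 1; 2; 2; 1; 2; 0; 0];
  [:: 2; 0; 0; 1; 2; 2; 2; 1; 0; 1; 0];
  [:: 1; 0; 0; 2; 2; 1; 2; 2; 0; 0; 1];
  [:: 1; 0; 0; 1; 2; 2; 1; 0; 2; 2; 0];
  [:: 1; 0; 0; 2; 2; 1; 2; 0; 2; 0; 1];
  [:: 2; 0; 0; 1; 1; 2; 1; 0; 0; 2; 2];
  [:: 1; 0; 0; 2; 1; 2; 0; 1; 2; 2; 0];
  [:: 1; 0; 0; 2; 1; 2; 0; 1; 2; 0; 2];
  [:: 2; 0; 0; 2; 2; 1; 0; 1; 0; 1; 2];
  [:: 1; 0; 0; 2; 2; 2; 0; 0; 1; 1; 2];
  [:: 1; 0; 0; 1; 2; 0; 1; 2; 2; 2; 0];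
  [:: 1; 0; 0; 2; 2; 0; 1; 2; 1; 0; 2];
  [:: 1; 0; 0; 2; 1; 0; 1; 1; 0; 1; 1];
  [:: 2; 0; 0; 2; 1; 0; 2; 0; 1; 1; 2];
  [:: 2; 0; 0; 1; 1; 0; 0; 2; 2; 1; 2];
  [:: 2; 0; 0; 2; 0; 2; 1; 1; 1; 2; 0];
  [:: 1; 0; 0; 2; 0; 2; 1; 2; 1; 0; 2];
  [:: 1; 0; 0; 1; 0; 2; 2; 2; 0; 2; 1];
  [:: 2; 0; 0; 1; 0; 1; 1; 0; 1; 1; 1];
  [:: 2; 0; 0; 2; 0; 1; 0; 1; 2; 1; 2];
  [:: 2; 0; 0; 1; 0; 0; 2; 1; 2; 2; 1];
  [:: 2; 0; 0; 0; 2; 2; 1; 1; 1; 2; 0];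
  [:: 2; 0; 0; 0; 2; 1; 1; 1; 2; 0; 2];
  [:: 1; 0; 0; 0; 1; 2; 1; 1; 0; 1; 1];
  [:: 2; 0; 0; 0; 1; 1; 2; 0; 2; 2; 1];
  [:: 1; 0; 0; 0; 2; 2; 0; 2; 1; 1; 2];
  [:: 1; 0; 0; 0; 1; 0; 1; 1; 2; 1; 1];
  [:: 1; 0; 0; 0; 0; 1; 2; 2; 2; 1; 2];
  [:: 0; 1; 2; 2; 2; 1; 2; 1; 0; 0; 0];
  [:: 0; 2; 2; 1; 1; 1; 2; 0; 2; 0; 0];
  [:: 0; 2; 1; 2; 2; 1; 2; 0; 0; 1; 0];
  [:: 0; 1; 1; 2; 1; 1; 1; 0; 0; 0; 1];
  [:: 0; 2; 1; 1; 1; 2; 0; 2; 2; 0; 0];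
  [:: 0; 1; 2; 2; 2; 1; 0; 1; 0; 2; 0];
  [:: 0; 2; 1; 1; 1; 2; 0; 2; 0; 0; 2];
  [:: 0; 2; 2; 1; 2; 2; 0; 0; 1; 1; 0];
  [:: 0; 1; 2; 1; 2; 2; 0; 0; 2; 0; 1];
  [:: 0; 2; 1; 1; 2; 1; 0; 0; 0; 2; 2];
  [:: 0; 1; 2; 1; 1; 0; 1; 1; 1; 0; 0];
  [:: 0; 1; 2; 2; 1; 0; 2; 2; 0; 1; 0];
  [:: 0; 2; 1; 2; 1; 0; 2; 1; 0; 0; 2];
  [:: 0; 2; 2; 1; 2; 0; 2; 0; 1; 1; 0];
  [:: 0; 2; 1; 1; 2; 0; 1; 0; 2; 0; 2];
  [:: 0; 1; 2; 2; 2; 0; 1; 0; 0; 1; 2];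
  [:: 0; 1; 1; 2; 1; 0; 0; 2; 2; 2; 0];
  [:: 0; 1; 1; 2; 2; 0; 0; 2; 1; 0; 2];
  [:: 0; 1; 1; 1; 2; 0; 0; 1; 0; 1; 1];
  [:: 0; 2; 2; 1; 2; 0; 0; 0; 1; 1; 2];
  [:: 0; 1; 1; 2; 0; 2; 2; 1; 2; 0; 0];
  [:: 0; 2; 1; 2; 0; 1; 2; 2; 0; 1; 0];
  [:: 0; 2; 2; 2; 0; 2; 1; 1; 0; 0; 1];
  [:: 0; 2; 1; 2; 0; 1; 2; 0; 2; 1; 0];
  [:: 0; 1; 2; 2; 0; 2; 2; 0; 1; 0; 1];
  [:: 0; 1; 2; 1; 0; 2; 1; 0; 0; 2; 2];
  [:: 0; 2; 2; 1; 0; 1; 0; 1; 2; 2; 0];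
  [:: 0; 2; 1; 2; 0; 1; 0; 2; 2; 0; 1];
  [:: 0; 1; 1; 1; 0; 2; 0; 1; 0; 1; 1];
  [:: 0; 1; 2; 2; 0; 1; 0; 0; 2; 1; 2];
  [:: 0; 2; 2; 2; 0; 0; 1; 1; 2; 1; 0];
  [:: 0; 1; 2; 2; 0; 0; 2; 2; 1; 0; 1];
  [:: 0; 1; 1; 1; 0; 0; 2; 1; 0; 1; 1];
  [:: 0; 2; 1; 1; 0; 0; 1; 0; 2; 2; 2];
  [:: 0; 1; 1; 1; 0; 0; 0; 1; 2; 1; 1];
  [:: 0; 2; 2; 0; 2; 1; 1; 2; 1; 0; 0];
  [:: 0; 1; 2; 0; 1; 2; 2; 2; 0; 1; 0];
  [:: 0; 1; 1; 0; 1; 1; 1; 2; 0; 0; 1];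
  [:: 0; 2; 2; 0; 1; 2; 1; 0; 2; 1; 0];
  [:: 0; 1; 1; 0; 1; 1; 1; 0; 2; 0; 1];
  [:: 0; 1; 1; 0; 1; 1; 1; 0; 0; 2; 1];
  [:: 0; 2; 1; 0; 1; 1; 0; 1; 1; 1; 0];
  [:: 0; 1; 1; 0; 2; 2; 0; 2; 1; 0; 2];
  [:: 0; 2; 2; 0; 2; 1; 0; 2; 0; 1; 1];
  [:: 0; 1; 2; 0; 2; 1; 0; 0; 2; 1; 2];
  [:: 0; 2; 1; 0; 2; 0; 1; 1; 2; 2; 0];
  [:: 0; 2; 2; 0; 1; 0; 2; 1; 2; 0; 1];
  [:: 0; 2; 1; 0; 2; 0; 1; 1; 0; 2; 2];
  [:: 0; 2; 2; 0; 1; 0; 1; 0; 1; 2; 2];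
  [:: 0; 2; 2; 0; 1; 0; 0; 1; 2; 2; 1];
  [:: 0; 1; 1; 0; 0; 2; 2; 1; 2; 2; 0];
  [:: 0; 1; 1; 0; 0; 2; 2; 1; 2; 0; 2];
  [:: 0; 2; 1; 0; 0; 2; 1; 2; 0; 1; 2];
  [:: 0; 2; 1; 0; 0; 2; 2; 0; 1; 2; 1];
  [:: 0; 2; 1; 0; 0; 2; 0; 2; 1; 2; 1];
  [:: 0; 2; 2; 0; 0; 0; 2; 1; 1; 1; 2];
  [:: 0; 1; 0; 1; 1; 2; 1; 1; 1; 0; 0];
  [:: 0; 2; 0; 2; 1; 1; 1; 2; 0; 2; 0];
  [:: 0; 1; 0; 1; 2; 1; 2; 2; 0; 0; 2];
  [:: 0; 2; 0; 2; 1; 2; 1; 0; 2; 1; 0];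
  [:: 0; 2; 0; 2; 1; 1; 2; 0; 1; 0; 2];
  [:: 0; 2; 0; 1; 1; 2; 2; 0; 0; 2; 1];
  [:: 0; 1; 0; 2; 2; 2; 0; 2; 1; 1; 0];
  [:: 0; 1; 0; 1; 2; 2; 0; 2; 2; 0; 1];
  [:: 0; 1; 0; 2; 1; 2; 0; 1; 0; 2; 2];
  [:: 0; 1; 0; 1; 2; 2; 0; 0; 2; 2; 1];
  [:: 0; 1; 0; 1; 1; 0; 1; 1; 1; 2; 0];
  [:: 0; 1; 0; 1; 1; 0; 1; 1; 1; 0; 2];
  [:: 0; 2; 0; 1; 1; 0; 2; 2; 0; 2; 1];
  [:: 0; 1; 0; 2; 2; 0; 1; 0; 2; 1; 2];
  [:: 0; 2; 0; 1; 1; 0; 0; 2; 2; 1; 2];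
  [:: 0; 2; 0; 1; 0; 1; 2; 1; 2; 2; 0];
  [:: 0; 2; 0; 2; 0; 2; 1; 1; 2; 0; 1];
  [:: 0; 1; 0; 1; 0; 1; 2; 2; 0; 2; 2];
  [:: 0; 2; 0; 1; 0; 1; 1; 0; 1; 1; 1];
  [:: 0; 1; 0; 2; 0; 2; 0; 2; 1; 1; 2];
  [:: 0; 1; 0; 2; 0; 0; 1; 2; 2; 2; 1];
  [:: 0; 1; 0; 0; 2; 1; 2; 2; 1; 2; 0];
  [:: 0; 2; 0; 0; 1; 2; 2; 2; 1; 0; 1];
  [:: 0; 1; 0; 0; 1; 2; 2; 1; 0; 2; 2];
  [:: 0; 1; 0; 0; 2; 1; 2; 0; 1; 2; 2];
  [:: 0; 1; 0; 0; 1; 2; 0; 1; 2; 2; 2];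
  [:: 0; 2; 0; 0; 2; 0; 2; 1; 1; 1; 2];
  [:: 0; 2; 0; 0; 0; 2; 2; 1; 1; 1; 2];
  [:: 0; 0; 1; 2; 2; 2; 1; 2; 1; 0; 0];
  [:: 0; 0; 2; 2; 1; 1; 1; 2; 0; 2; 0];
  [:: 0; 0; 2; 1; 2; 2; 1; 2; 0; 0; 1];
  [:: 0; 0; 2; 1; 1; 1; 2; 0; 2; 2; 0];
  [:: 0; 0; 1; 2; 2; 2; 1; 0; 1; 0; 2];
  [:: 0; 0; 2; 2; 1; 2; 2; 0; 0; 1; 1];
  [:: 0; 0; 1; 2; 1; 1; 0; 1; 1; 1; 0];
  [:: 0; 0; 1; 2; 2; 1; 0; 2; 2; 0; 1];
  [:: 0; 0; 2; 2; 1; 2; 0; 2; 0; 1; 1];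
  [:: 0; 0; 1; 1; 2; 1; 0; 0; 2; 2; 2];
  [:: 0; 0; 1; 1; 2; 0; 2; 2; 1; 2; 0];
  [:: 0; 0; 2; 1; 2; 0; 1; 2; 2; 0; 1];
  [:: 0; 0; 2; 1; 2; 0; 1; 2; 0; 2; 1];
  [:: 0; 0; 2; 2; 1; 0; 1; 0; 1; 2; 2];
  [:: 0; 0; 2; 2; 2; 0; 0; 1; 1; 2; 1];
  [:: 0; 0; 2; 2; 0; 2; 1; 1; 2; 1; 0];
  [:: 0; 0; 1; 2; 0; 1; 2; 2; 2; 0; 1];
  [:: 0; 0; 2; 2; 0; 1; 2; 1; 0; 2; 1];
  [:: 0; 0; 2; 1; 0; 1; 1; 0; 1; 1; 1];
  [:: 0; 0; 2; 1; 0; 2; 0; 1; 1; 2; 2];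
  [:: 0; 0; 1; 1; 0; 0; 2; 2; 1; 2; 2];
  [:: 0; 0; 1; 0; 1; 1; 2; 1; 1; 1; 0];
  [:: 0; 0; 2; 0; 2; 1; 1; 1; 2; 0; 2];
  [:: 0; 0; 2; 0; 2; 1; 2; 1; 0; 2; 1];
  [:: 0; 0; 1; 0; 2; 2; 2; 0; 2; 1; 1];
  [:: 0; 0; 1; 0; 1; 1; 0; 1; 1; 1; 2];
  [:: 0; 0; 2; 0; 1; 0; 1; 2; 1; 2; 2];
  [:: 0; 0; 1; 0; 0; 2; 1; 2; 2; 1; 2];
  [:: 0; 0; 0; 1; 2; 2; 2; 1; 2; 1; 0];
  [:: 0; 0; 0; 2; 2; 1; 1; 1; 2; 0; 2];
  [:: 0; 0; 0; 2; 1; 1; 1; 2; 0; 2; 2];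
  [:: 0; 0; 0; 1; 2; 1; 1; 0; 1; 1; 1];
  [:: 0; 0; 0; 1; 1; 2; 0; 2; 2; 1; 2];
  [:: 0; 0; 0; 2; 2; 0; 2; 1; 1; 2; 1];
  [:: 0; 0; 0; 1; 0; 1; 1; 2; 1; 1; 1];
  [:: 0; 0; 0; 0; 1; 2; 2; 2; 1; 2; 1]].

Definition goodn (p q r : nat) : bool :=
  let z := ((p == 0) + (q == 0) + (r == 0))%N in
  (z == 2) || ((z == 1) && (p + q + r == 3)).

Fixpoint good3 (u v w : seq nat) : bool :=
  match u, v, w with
  | p :: u', q :: v', r :: w' => goodn p q r || good3 u' v' w'
  | _, _, _ => false
  end.

Definition tri_with (u v : seq nat) (l : seq (seq nat)) : bool := all (good3 u v) l.
Fixpoint pair_with (u : seq nat) (l : seq (seq nat)) : bool :=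
  match l with [::] => true | v :: l' => tri_with u v l' && pair_with u l' end.
Fixpoint tri (l : seq (seq nat)) : bool :=
  match l with [::] => true | u :: l' => pair_with u l' && tri l' end.


Fixpoint zn (u v : seq nat) : bool :=
  match u, v with p :: u', q :: v' => ((p == 0) && (q != 0)) || zn u' v' | _, _ => false end.
Fixpoint pairs2 (l : seq (seq nat)) : bool :=
  match l with [::] => true | u :: l' => all (fun v => zn u v && zn v u) l' && pairs2 l' end.
Definition shape_ok : bool :=
  (size Alist == 330) &&
  all (fun u => (size u == 11) && all (fun p => p < 3) u && (count_mem 0 u == 4)) Alist.

Lemma shape_okT : shape_ok. Proof. by vm_compute. Qed.
Lemma pairs2T : pairs2 Alist. Proof. by vm_compute. Qed.
Lemma triT : tri Alist. Proof. by vm_compute. Qed.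

Lemma good3P u v w : good3 u v w ->
  exists i, (i < size u) && goodn (nth 0 u i) (nth 0 v i) (nth 0 w i).
Proof.
elim: u v w => [|p u IH] [|q v] [|r w] //=.
case/orP => [H|/IH [i /andP[Hi Hg]]]; first by exists 0.
by exists i.+1; rewrite /= ltnS Hi.
Qed.

Lemma znP u v : zn u v -> exists i, [&& i < size u, nth 0 u i == 0 & nth 0 v i != 0].
Proof.
elim: u v => [|p u IH] [|q v] //=.
case/orP => [/andP[H1 H2]|/IH [i /and3P[Hi H1 H2]]]; first by exists 0; rewrite H1 H2.
by exists i.+1; rewrite /= ltnS Hi H1 H2.
Qed.

Lemma tri_nth l i j k : tri l -> i < j -> j < k -> k < size l ->
  good3 (nth [::] l i) (nth [::] l j) (nth [::] l k).
Proof.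
elim: l i j k => [|u l IH] i j k //= /andP[Hp Ht].
case: i => [|i]; last first.
  case: j => [|j] //; case: k => [|k] //= Hij Hjk Hk; exact: IH.
case: j => [|j] //; case: k => [|k] //= _ Hjk Hk.
elim: l j k Hp Ht Hjk Hk {IH} => [|v l IH2] j k //= /andP[Hv Hp] Ht.
case: j => [|j]; last first.
  case: k => [|k] //= Hjk Hk; apply: IH2 => //; by case/andP: Ht.
case: k => [|k] //= _ Hk; move/allP: Hv => Hv; apply: Hv; exact: mem_nth.
Qed.

Lemma pairs2_nth l i j : pairs2 l -> i < j -> j < size l ->
  zn (nth [::] l i) (nth [::] l j) && zn (nth [::] l j) (nth [::] l i).
Proof.
elim: l i j => [|u l IH] i j //= /andP[Hp Ht].
case: i => [|i]; last by case: j => [|j] //= Hij Hj; exact: IH.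
case: j => [|j] //= _ Hj; move/allP: Hp => Hp; apply: Hp; exact: mem_nth.
Qed.

Definition Aval (a : 'I_330) (i : 'I_11) : nat := nth 0 (nth [::] Alist a) i.

Lemma goodn12 p q r : goodn p q r = goodn q p r.
Proof. by rewrite /goodn (addnC (p == 0)) (addnC p q). Qed.
Lemma goodn23 p q r : goodn p q r = goodn p r q.
Proof. by rewrite /goodn -!addnA (addnC (q == 0)) (addnC q r). Qed.

Lemma sizeAl : size Alist = 330.
Proof. by have /andP[/eqP -> _] := shape_okT. Qed.
Lemma memA (a : 'I_330) : nth [::] Alist a \in Alist.
Proof. by apply: mem_nth; rewrite sizeAl. Qed.
Lemma sizeA (a : 'I_330) : size (nth [::] Alist a) = 11.
Proof.
have /andP[_ /allP H] := shape_okT.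
by have /andP[/andP[/eqP -> _] _] := H _ (memA a).
Qed.

Lemma tri_ord (a b c : 'I_330) : a < b -> b < c ->
  exists i : 'I_11, goodn (Aval a i) (Aval b i) (Aval c i).
Proof.
move=> Hab Hbc.
have := tri_nth triT Hab Hbc; rewrite sizeAl => /(_ (ltn_ord c)) /good3P [i /andP[Hi Hg]].
rewrite sizeA in Hi; by exists (Ordinal Hi).
Qed.

Lemma Z2 (u v : 'I_330) : u != v -> exists i : 'I_11, (Aval u i == 0) && (Aval v i != 0).
Proof.
move=> Nuv; case: (ltngtP u v) => [H|H|/val_inj E].
- have := pairs2_nth pairs2T H; rewrite sizeAl => /(_ (ltn_ord v)) /andP[/znP [i /and3P[Hi H1 H2]] _].
  rewrite sizeA in Hi; by exists (Ordinal Hi); rewrite /Aval H1 H2.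
- have := pairs2_nth pairs2T H; rewrite sizeAl => /(_ (ltn_ord u)) /andP[_ /znP [i /and3P[Hi H1 H2]]].
  rewrite sizeA in Hi; by exists (Ordinal Hi); rewrite /Aval H1 H2.
- by rewrite E eqxx in Nuv.
Qed.

Lemma outer_good (a b c : 'I_330) : ~ (a = b /\ b = c) ->
  exists i : 'I_11, goodn (Aval a i) (Aval b i) (Aval c i).
Proof.
move=> Hne.
case: (eqVneq a b) => [Eab|Nab].
  subst b; have Nac : a != c by apply/eqP => E; apply: Hne.
  have [i /andP[H1 H2]] := Z2 Nac; exists i; by rewrite /goodn H1 (negbTE H2).
case: (eqVneq b c) => [Ebc|Nbc].
  subst c; have Nba : b != a by rewrite eq_sym.
  have [i /andP[H1 H2]] := Z2 Nba; exists i; by rewrite /goodn H1 (negbTE H2).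
case: (eqVneq a c) => [Eac|Nac].
  subst c; have [i /andP[H1 H2]] := Z2 Nab; exists i; by rewrite /goodn H1 (negbTE H2).
case: (ltngtP a b) => [Hab|Hab|/val_inj E]; last by rewrite E eqxx in Nab.
- case: (ltngtP b c) => [Hbc|Hbc|/val_inj E]; last by rewrite E eqxx in Nbc.
  + exact: tri_ord.
  + case: (ltngtP a c) => [Hac|Hac|/val_inj E]; last by rewrite E eqxx in Nac.
    * have [i H] := tri_ord Hac Hbc; exists i; by rewrite goodn23.
    * have [i H] := tri_ord Hac Hab; exists i; move: H; by rewrite goodn12 goodn23.
- case: (ltngtP b c) => [Hbc|Hbc|/val_inj E]; last by rewrite E eqxx in Nbc.
  + case: (ltngtP a c) => [Hac|Hac|/val_inj E]; last by rewrite E eqxx in Nac.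
    * have [i H] := tri_ord Hab Hac; exists i; by rewrite goodn12.
    * have [i H] := tri_ord Hbc Hac; exists i; move: H; by rewrite goodn23 goodn12.
  + have [i H] := tri_ord Hbc Hab; exists i; move: H; by rewrite goodn12 goodn23 goodn12.
Qed.


Local Open Scope ring_scope.

Section Gen.
Variable U : finZmodType.

Definition zf (A B C : {set U}) :=
  forall a b c, a \in A -> b \in B -> c \in C -> a + b + c != 0.
Definition capP (A : {set U}) :=
  forall a b c, a \in A -> b \in A -> c \in A -> a + b + c = 0 -> a = b /\ b = c.

Lemma zf12 A B C : zf A B C -> zf B A C.
Proof. by move=> H b a c Hb Ha Hc; rewrite (addrC b a); apply: H. Qed.
Lemma zf23 A B C : zf A B C -> zf A C B.
Proof. by move=> H a c b Ha Hc Hb; rewrite -addrA (addrC c b) addrA; apply: H. Qed.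

End Gen.

Lemma card_ffset (I V : finType) (S : I -> {set V}) :
  #|[set f : {ffun I -> V} | [forall i, f i \in S i]]| = (\prod_i #|S i|)%N.
Proof.
have E : [set f : {ffun I -> V} | [forall i, f i \in S i]] =i family (fun i => mem (S i)).
  by move=> f; rewrite inE; apply/forallP/familyP.
rewrite (eq_card E) card_family foldrE big_map big_enum /=.
by apply: eq_bigr => i _.
Qed.

Section Prod.
Variables (I : finType) (U : finZmodType).
Definition box (S : I -> {set U}) : {set {ffun I -> U}} :=
  [set f : {ffun I -> U} | [forall i, f i \in S i]].

Lemma card_box S : #|box S| = (\prod_i #|S i|)%N.
Proof.
have E : box S =i family (fun i => mem (S i)).
  by move=> f; rewrite inE; apply/forallP/familyP.
rewrite (eq_card E) card_family foldrE big_map big_enum /=.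
by apply: eq_bigr => i _.
Qed.
End Prod.

Section Union.
Variables (I X : finType) (U : finZmodType).
Variables (Ind : {set X}) (lab : X -> I -> nat) (T : nat -> {set U}).
Hypothesis Tcap : forall p, capP (T p).
Hypothesis char3 : forall u : U, u + u + u = 0.
Hypothesis good : forall x y z, x \in Ind -> y \in Ind -> z \in Ind ->
  ~ (x = y /\ y = z) -> exists i, zf (T (lab x i)) (T (lab y i)) (T (lab z i)).

Definition Bx x := box (fun i => T (lab x i)).
Definition Cap := \bigcup_(x in Ind) Bx x.

Lemma Cap_cap f g h : f \in Cap -> g \in Cap -> h \in Cap -> f + g + h = 0 ->
  f = g /\ g = h.
Proof.
move=> /bigcupP[x Hx Hf] /bigcupP[y Hy Hg] /bigcupP[z Hz Hh] E.
have Ei i : f i + g i + h i = 0.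
  by have := congr1 (fun F : {ffun I -> U} => F i) E; rewrite !ffunE.
move: Hf Hg Hh; rewrite !inE => /forallP Hf /forallP Hg /forallP Hh.
case: (boolP ((x == y) && (y == z))) => [/andP[/eqP Exy /eqP Eyz] | Hn].
  subst y z; split; apply/ffunP => i;
    by have [] := Tcap (Hf i) (Hg i) (Hh i) (Ei i).
have [i Hi] : exists i, zf (T (lab x i)) (T (lab y i)) (T (lab z i)).
  apply: good => // -[Exy Eyz]; move: Hn; by rewrite Exy Eyz !eqxx.
by have := Hi _ _ _ (Hf i) (Hg i) (Hh i); rewrite Ei eqxx.
Qed.

Lemma Bx_disj x y f : x \in Ind -> y \in Ind -> x != y -> f \in Bx x -> f \notin Bx y.
Proof.
move=> Hx Hy Nxy Hfx; apply/negP => Hfy.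
have [i Hi] : exists i, zf (T (lab x i)) (T (lab x i)) (T (lab y i)).
  by apply: good => // -[_ E]; move: Nxy; rewrite E eqxx.
move: Hfx Hfy; rewrite !inE => /forallP Hfx /forallP Hfy.
by have := Hi _ _ _ (Hfx i) (Hfx i) (Hfy i); rewrite char3 eqxx.
Qed.

Lemma card_Cap : #|Cap| = (\sum_(x in Ind) #|Bx x|)%N.
Proof.
have -> : (\sum_(x in Ind) #|Bx x|)%N =
    (\sum_(x in Ind) \sum_(f : {ffun I -> U}) ((f \in Bx x) : nat))%N.
  by apply: eq_bigr => x _; rewrite -sum1_card big_mkcond.
rewrite (exchange_big_dep predT) //= -sum1_card big_mkcond /=.
apply: eq_bigr => f _.
case: (boolP (f \in Cap)) => [/bigcupP[x0 Hx0 Hf0] | Hn].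
  rewrite (bigD1 x0) ?Hx0 //= (_ : (f \in Bx x0) = true) // big1 // => x /andP[/andP[Hx _] Nx].
  by rewrite (negbTE (Bx_disj Hx0 Hx _ Hf0)) // eq_sym.
rewrite big1 // => x Hx; apply/eqP; rewrite eqb0; apply/negP => Hf.
move: Hn; rewrite andbT in Hx; by have -> : f \in Cap by apply/bigcupP; exists x.
Qed.
End Union.


Notation F3 := ('F_3).
Notation W := (F3 * F3 * F3 * F3 * F3 * F3)%type.
Definition f0 : F3 := 0.
Definition f1 : F3 := 1.
Definition f2 : F3 := 2%:R.
Definition Pl : seq W := [:: (f1,f0,f0,f0,f0,f0);
  (f0,f1,f0,f0,f0,f0);
  (f2,f1,f2,f1,f0,f1);
  (f1,f0,f2,f2,f1,f1);
  (f0,f0,f1,f0,f0,f2);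
  (f0,f2,f1,f2,f2,f1);
  (f0,f0,f1,f0,f1,f2);
  (f1,f2,f2,f0,f0,f0);
  (f0,f2,f1,f2,f1,f0);
  (f0,f0,f2,f1,f2,f1);
  (f2,f2,f2,f1,f2,f1);
  (f0,f2,f0,f1,f1,f2);
  (f2,f0,f2,f1,f1,f0);
  (f2,f1,f1,f2,f0,f2);
  (f2,f1,f0,f1,f1,f2);
  (f2,f2,f2,f2,f1,f1);
  (f0,f0,f2,f1,f0,f2);
  (f2,f0,f0,f2,f1,f1);
  (f2,f1,f0,f2,f1,f0);
  (f2,f2,f1,f1,f0,f0);
  (f0,f0,f0,f2,f0,f1);
  (f1,f0,f0,f0,f0,f1);
  (f2,f0,f1,f1,f0,f2);
  (f0,f1,f2,f2,f0,f1);
  (f1,f1,f2,f0,f1,f1);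
  (f1,f1,f1,f2,f0,f0);
  (f2,f1,f2,f2,f2,f0);
  (f2,f2,f0,f2,f0,f0);
  (f1,f2,f1,f1,f1,f1);
  (f2,f2,f2,f0,f1,f1);
  (f0,f2,f1,f2,f2,f0);
  (f0,f2,f0,f0,f2,f1);
  (f1,f0,f2,f2,f2,f0);
  (f0,f1,f0,f2,f2,f2);
  (f1,f2,f0,f0,f1,f1);
  (f2,f0,f0,f0,f1,f2);
  (f1,f1,f1,f1,f2,f0);
  (f1,f2,f2,f2,f2,f1);
  (f0,f1,f0,f1,f0,f1);
  (f2,f2,f1,f0,f1,f1);
  (f1,f0,f0,f0,f1,f0);
  (f0,f1,f0,f0,f0,f1);
  (f2,f0,f1,f2,f2,f2);
  (f1,f2,f2,f0,f2,f1);
  (f2,f2,f2,f2,f0,f0);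
  (f0,f0,f2,f0,f2,f0);
  (f0,f1,f0,f2,f1,f2);
  (f0,f2,f2,f0,f1,f0);
  (f0,f0,f2,f2,f1,f2);
  (f2,f0,f0,f2,f2,f2);
  (f1,f2,f0,f2,f1,f1);
  (f1,f1,f2,f0,f1,f0);
  (f1,f0,f0,f1,f0,f1);
  (f2,f2,f2,f1,f2,f0);
  (f0,f0,f2,f0,f0,f2);
  (f2,f1,f2,f0,f0,f0);
  (f2,f0,f0,f0,f0,f0);
  (f0,f2,f0,f0,f0,f0);
  (f1,f2,f1,f2,f0,f2);
  (f2,f0,f1,f1,f2,f2);
  (f0,f0,f2,f0,f0,f1);
  (f0,f1,f2,f1,f1,f2);
  (f0,f0,f2,f0,f2,f1);
  (f2,f1,f1,f0,f0,f0);
  (f0,f1,f2,f1,f2,f0);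
  (f0,f0,f1,f2,f1,f2);
  (f1,f1,f1,f2,f1,f2);
  (f0,f1,f0,f2,f2,f1);
  (f1,f0,f1,f2,f2,f0);
  (f1,f2,f2,f1,f0,f1);
  (f1,f2,f0,f2,f2,f1);
  (f1,f1,f1,f1,f2,f2);
  (f0,f0,f1,f2,f0,f1);
  (f1,f0,f0,f1,f2,f2);
  (f1,f2,f0,f1,f2,f0);
  (f1,f1,f2,f2,f0,f0);
  (f0,f0,f0,f1,f0,f2);
  (f2,f0,f0,f0,f0,f2);
  (f1,f0,f2,f2,f0,f1);
  (f0,f2,f1,f1,f0,f2);
  (f2,f2,f1,f0,f2,f2);
  (f2,f2,f2,f1,f0,f0);
  (f1,f2,f1,f1,f1,f0);
  (f1,f1,f0,f1,f0,f0);
  (f2,f1,f2,f2,f2,f2);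
  (f1,f1,f1,f0,f2,f2);
  (f0,f1,f2,f1,f1,f0);
  (f0,f1,f0,f0,f1,f2);
  (f2,f0,f1,f1,f1,f0);
  (f0,f2,f0,f1,f1,f1);
  (f2,f1,f0,f0,f2,f2);
  (f1,f0,f0,f0,f2,f1);
  (f2,f2,f2,f2,f1,f0);
  (f2,f1,f1,f1,f1,f2);
  (f0,f2,f0,f2,f0,f2);
  (f1,f1,f2,f0,f2,f2);
  (f2,f0,f0,f0,f2,f0);
  (f0,f2,f0,f0,f0,f2);
  (f1,f0,f2,f1,f1,f1);
  (f2,f1,f1,f0,f1,f2);
  (f1,f1,f1,f1,f0,f0);
  (f0,f0,f1,f0,f1,f0);
  (f0,f2,f0,f1,f2,f1);
  (f0,f1,f1,f0,f2,f0);
  (f0,f0,f1,f1,f2,f1);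
  (f1,f0,f0,f1,f1,f1);
  (f2,f1,f0,f1,f2,f2);
  (f2,f2,f1,f0,f2,f0);
  (f2,f0,f0,f2,f0,f2);
  (f1,f1,f1,f2,f1,f0);
  (f0,f0,f1,f0,f0,f1);
  (f1,f2,f1,f0,f0,f0)].
Definition Ql : seq W := [:: (f1,f0,f0,f0,f2,f1);
  (f0,f0,f0,f2,f0,f0);
  (f0,f1,f0,f0,f1,f1);
  (f2,f1,f0,f1,f2,f1);
  (f0,f1,f1,f0,f2,f2);
  (f2,f0,f0,f2,f0,f1);
  (f2,f2,f0,f2,f0,f2);
  (f0,f1,f1,f2,f1,f2);
  (f2,f1,f0,f1,f0,f1);
  (f2,f0,f1,f2,f2,f2);
  (f1,f0,f1,f0,f0,f1);
  (f2,f2,f2,f2,f1,f1);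
  (f1,f1,f1,f1,f0,f1);
  (f1,f2,f0,f1,f1,f0);
  (f1,f2,f2,f0,f2,f0);
  (f0,f1,f0,f2,f1,f2);
  (f2,f2,f1,f0,f2,f2);
  (f1,f0,f2,f0,f2,f1);
  (f0,f2,f1,f0,f0,f1);
  (f1,f1,f0,f1,f1,f2);
  (f0,f2,f0,f1,f0,f2);
  (f2,f1,f1,f2,f1,f1);
  (f0,f0,f2,f1,f2,f2);
  (f2,f0,f1,f1,f2,f0);
  (f0,f0,f1,f1,f1,f2);
  (f1,f0,f1,f0,f1,f2);
  (f1,f1,f1,f0,f0,f2);
  (f1,f1,f2,f0,f2,f1);
  (f0,f0,f0,f2,f2,f1);
  (f1,f0,f1,f0,f0,f0);
  (f1,f2,f2,f0,f1,f1);
  (f2,f0,f2,f1,f1,f0);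
  (f0,f1,f1,f1,f1,f1);
  (f2,f2,f2,f0,f1,f2);
  (f1,f2,f0,f2,f2,f1);
  (f0,f0,f1,f0,f0,f2);
  (f1,f0,f1,f0,f1,f1);
  (f1,f2,f2,f1,f0,f1);
  (f2,f0,f2,f2,f1,f1);
  (f0,f1,f2,f1,f2,f1);
  (f0,f1,f2,f2,f0,f1);
  (f1,f1,f1,f1,f2,f0);
  (f2,f1,f1,f0,f0,f0);
  (f2,f1,f0,f2,f2,f2);
  (f0,f2,f0,f1,f1,f2);
  (f0,f0,f2,f2,f1,f1);
  (f0,f1,f0,f1,f0,f2);
  (f1,f2,f0,f1,f0,f1);
  (f2,f2,f1,f0,f2,f0);
  (f1,f2,f2,f1,f2,f1);
  (f0,f0,f2,f1,f0,f0);
  (f2,f2,f0,f2,f2,f2);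
  (f0,f0,f2,f0,f0,f2);
  (f0,f2,f0,f1,f1,f1);
  (f1,f0,f0,f2,f0,f1);
  (f1,f1,f1,f0,f0,f0);
  (f2,f0,f0,f0,f1,f2);
  (f0,f0,f0,f1,f0,f0);
  (f0,f2,f0,f0,f2,f2);
  (f1,f2,f0,f2,f1,f2);
  (f0,f2,f2,f0,f1,f1);
  (f1,f0,f0,f1,f0,f2);
  (f1,f1,f0,f1,f0,f1);
  (f0,f2,f2,f1,f2,f1);
  (f1,f2,f0,f2,f0,f2);
  (f1,f0,f2,f1,f1,f1);
  (f2,f0,f2,f0,f0,f2);
  (f1,f1,f1,f1,f2,f2);
  (f2,f2,f2,f2,f0,f2);
  (f2,f1,f0,f2,f2,f0);
  (f2,f1,f1,f0,f1,f0);
  (f0,f2,f0,f1,f2,f1);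
  (f1,f1,f2,f0,f1,f1);
  (f2,f0,f1,f0,f1,f2);
  (f0,f1,f2,f0,f0,f2);
  (f2,f2,f0,f2,f2,f1);
  (f0,f1,f0,f2,f0,f1);
  (f1,f2,f2,f1,f2,f2);
  (f0,f0,f1,f2,f1,f1);
  (f1,f0,f2,f2,f1,f0);
  (f0,f0,f2,f2,f2,f1);
  (f2,f0,f2,f0,f2,f1);
  (f2,f2,f2,f0,f0,f1);
  (f2,f2,f1,f0,f1,f2);
  (f0,f0,f0,f1,f1,f2);
  (f2,f0,f2,f0,f0,f0);
  (f2,f1,f1,f0,f2,f2);
  (f1,f0,f1,f2,f2,f0);
  (f0,f2,f2,f2,f2,f2);
  (f1,f1,f1,f0,f2,f1);
  (f2,f1,f0,f1,f1,f2);
  (f0,f0,f2,f0,f0,f1);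
  (f2,f0,f2,f0,f2,f2);
  (f2,f1,f1,f2,f0,f2);
  (f1,f0,f1,f1,f2,f2);
  (f0,f2,f1,f2,f1,f2);
  (f0,f2,f1,f1,f0,f2);
  (f2,f2,f2,f2,f1,f0);
  (f1,f2,f2,f0,f0,f0);
  (f1,f2,f0,f1,f1,f1);
  (f0,f1,f0,f2,f2,f1);
  (f0,f0,f1,f1,f2,f2);
  (f0,f2,f0,f2,f0,f1);
  (f2,f1,f0,f2,f0,f2);
  (f1,f1,f2,f0,f1,f0);
  (f2,f1,f1,f2,f1,f2);
  (f0,f0,f1,f2,f0,f0);
  (f1,f1,f0,f1,f1,f1);
  (f0,f0,f1,f0,f0,f1);
  (f0,f1,f0,f2,f2,f2);
  (f2,f0,f0,f1,f0,f2);
  (f2,f2,f2,f0,f0,f0)].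
Definition El : seq W := [:: (f2,f0,f2,f0,f2,f0);
  (f1,f1,f2,f2,f2,f0);
  (f1,f2,f2,f1,f2,f0);
  (f1,f0,f1,f0,f1,f0);
  (f2,f1,f1,f2,f1,f0);
  (f2,f2,f1,f1,f1,f0);
  (f0,f1,f0,f0,f0,f2);
  (f0,f2,f1,f2,f2,f2);
  (f2,f2,f1,f1,f1,f2);
  (f0,f2,f0,f0,f0,f1);
  (f1,f1,f2,f2,f2,f1);
  (f0,f1,f2,f1,f1,f1)].


Definition capb (l : seq W) := all (fun a => all (fun b => (- (a + b) \in l) ==> (a == b)) l) l.
Definition zfb (l1 l2 l3 : seq W) := all (fun a => all (fun b => - (a + b) \notin l3) l2) l1.

Definition comp (x : W) (d : 'I_6) : F3 :=
  match x with (a, b, c, e, f, g) =>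
    match val d with 0 => a | 1 => b | 2 => c | 3 => e | 4 => f | _ => g end end%N.
Definition emb (x : W) : 'rV['F_3]_6 := \row_d comp x d.

Lemma embD x y : emb (x + y) = emb x + emb y.
Proof.
apply/rowP => d; rewrite !mxE.
by case: x => [[[[[a b] c] e] f] g]; case: y => [[[[[a' b'] c'] e'] f'] g'];
  case: d => [[|[|[|[|[|[|]]]]]] ?].
Qed.

Lemma emb0 : emb 0 = 0.
Proof. by apply/rowP => d; rewrite !mxE; case: d => [[|[|[|[|[|[|]]]]]] ?]. Qed.

Lemma emb_inj : injective emb.
Proof.
move=> x y E.
have H d : comp x d = comp y d by have := congr1 (fun M : 'rV['F_3]_6 => M 0 d) E; rewrite !mxE.
clear E; case: x H => [[[[[a b] c] e] f] g]; case: y => [[[[[a' b'] c'] e'] f'] g'] H.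
have := H (@Ordinal 6 0 isT); have := H (@Ordinal 6 1 isT); have := H (@Ordinal 6 2 isT).
have := H (@Ordinal 6 3 isT); have := H (@Ordinal 6 4 isT); have := H (@Ordinal 6 5 isT).
by rewrite /comp /= => -> -> -> -> -> ->.
Qed.

Lemma char3F (a : F3) : a + a + a = 0.
Proof. by apply/val_inj; case: a => [[|[|[|]]] ?]. Qed.

Lemma addpE (A B : zmodType) (x y : A * B) : x + y = (x.1 + y.1, x.2 + y.2).
Proof. by []. Qed.
Lemma zeropE (A B : zmodType) : (0 : A * B) = (0, 0).
Proof. by []. Qed.

Lemma char3W (x : W) : x + x + x = 0.
Proof.
case: x => [[[[[a b] c] e] f] g].
by rewrite !addpE /= !char3F !zeropE.
Qed.

Lemma char3R (u : 'rV['F_3]_6) : u + u + u = 0.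
Proof. by apply/rowP => d; rewrite !mxE char3F. Qed.

Definition Tl (l : seq W) : {set 'rV['F_3]_6} := [set emb x | x in l].

Lemma card_Tl l : uniq l -> #|Tl l| = size l.
Proof. by move=> U; rewrite card_in_imset ?(card_uniqP _) // => x y _ _; apply: emb_inj. Qed.

Lemma zf_of l1 l2 l3 : zfb l1 l2 l3 -> zf (Tl l1) (Tl l2) (Tl l3).
Proof.
move=> H a b c /imsetP[x Hx ->] /imsetP[y Hy ->] /imsetP[z Hz ->].
rewrite -!embD; apply/negP => /eqP E.
have E2 : x + y + z = 0 by apply: emb_inj; rewrite E emb0.
have Ez : z = - (x + y) by apply/eqP; rewrite -addr_eq0 addrC E2.
move/allP: H => /(_ x Hx) /allP /(_ y Hy); by rewrite -Ez Hz.
Qed.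

Lemma cap_of l : capb l -> capP (Tl l).
Proof.
move=> H a b c /imsetP[x Hx ->] /imsetP[y Hy ->] /imsetP[z Hz ->].
rewrite -!embD => E.
have E2 : x + y + z = 0 by apply: emb_inj; rewrite E emb0.
have Ez : z = - (x + y) by apply/eqP; rewrite -addr_eq0 addrC E2.
move/allP: H => /(_ x Hx) /allP /(_ y Hy); rewrite -Ez Hz /= => /eqP Exy.
subst y; split => //; congr emb.
by apply/eqP; rewrite Ez -addr_eq0 addrA char3W.
Qed.


Definition innerb (t j : nat) : nat := if j == t then 0%N else if (t < j)%N then 1%N else 2%N.
Definition bl (a t p : nat) : nat := if a == 0%N then innerb t p else a.

Definition BGb : bool :=
  all (fun a => all (fun b => all (fun c => goodn a b c ==>
    all (fun ta => all (fun tb => all (fun tc =>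
      has (fun p => goodn (bl a ta p) (bl b tb p) (bl c tc p)) (iota 0 6))
    (iota 0 6)) (iota 0 6)) (iota 0 6)) (iota 0 3)) (iota 0 3)) (iota 0 3).
Definition B23b : bool :=
  all (fun tx => all (fun ty => all (fun tz => ((tx == ty) && (ty == tz)) ||
      has (fun p => goodn (innerb tx p) (innerb ty p) (innerb tz p)) (iota 0 6))
    (iota 0 6)) (iota 0 6)) (iota 0 6).
Lemma BGbT : BGb. Proof. by vm_compute. Qed.
Lemma B23bT : B23b. Proof. by vm_compute. Qed.

Lemma allPi (T : eqType) (P : pred T) s x : all P s -> x \in s -> P x.
Proof. by move/allP; apply. Qed.
Lemma memi n k : (k < n)%N -> k \in iota 0 n.
Proof. by rewrite mem_iota. Qed.

Lemma BG a b c ta tb tc : (a < 3)%N -> (b < 3)%N -> (c < 3)%N -> goodn a b c ->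
  (ta < 6)%N -> (tb < 6)%N -> (tc < 6)%N ->
  exists p : 'I_6, goodn (bl a ta p) (bl b tb p) (bl c tc p).
Proof.
move=> Ha Hb Hc Hg Hta Htb Htc.
have H := implyP (allPi (allPi (allPi BGbT (memi Ha)) (memi Hb)) (memi Hc)) Hg.
have /hasP [p] := allPi (allPi (allPi H (memi Hta)) (memi Htb)) (memi Htc).
rewrite mem_iota add0n => /andP[_ Hp] Hgp.
by exists (Ordinal Hp).
Qed.

Lemma B23 tx ty tz : (tx < 6)%N -> (ty < 6)%N -> (tz < 6)%N ->
  ~~ ((tx == ty) && (ty == tz)) ->
  exists p : 'I_6, goodn (innerb tx p) (innerb ty p) (innerb tz p).
Proof.
move=> Hx Hy Hz Hn.
case/orP: (allPi (allPi (allPi B23bT (memi Hx)) (memi Hy)) (memi Hz)) => [Heq|/hasP [p]].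
  by rewrite Heq in Hn.
rewrite mem_iota add0n => /andP[_ Hp] Hgp.
by exists (Ordinal Hp).
Qed.

Definition X := ('I_330 * {ffun 'I_11 -> 'I_6})%type.
Definition I := ('I_11 * 'I_6)%type.
Definition Ind : {set X} :=
  [set x : X | [forall i : 'I_11, (Aval x.1 i != 0%N) ==> (x.2 i == ord0)]].
Definition lab (x : X) (k : I) : nat := bl (Aval x.1 k.1) (x.2 k.1) k.2.

Lemma Aval_lt3 a i : (Aval a i < 3)%N.
Proof.
have /andP[_ /allP H] := shape_okT.
have /andP[/andP[/eqP Hs /allP H3] _] := H _ (memA a).
rewrite /Aval; case: (ltnP i (size (nth [::] Alist a))) => Hi.
  by apply: H3; apply: mem_nth.
by rewrite nth_default.
Qed.

Lemma lab_good x y z : x \in Ind -> y \in Ind -> z \in Ind -> ~ (x = y /\ y = z) ->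
  exists k : I, goodn (lab x k) (lab y k) (lab z k).
Proof.
case: x => a ta; case: y => b tb; case: z => c tc.
rewrite !inE /= => /forallP Hx /forallP Hy /forallP Hz Hne.
case: (boolP ((a == b) && (b == c))) => [/andP[/eqP Eab /eqP Ebc] | Hn].
  subst b c.
  have [i Hi] : exists i, ~~ ((ta i == tb i) && (tb i == tc i)).
    apply/existsP; apply: contraT; rewrite negb_exists => /forallP H.
    exfalso; apply: Hne; split; congr pair; apply/ffunP => i;
      by have /andP[/eqP E1 /eqP E2] := negbNE (H i); rewrite ?E1 ?E2.
  have Hai : Aval a i = 0%N.
    apply/eqP; apply: contraT => Ha.
    move: (Hx i) (Hy i) (Hz i); rewrite Ha /= => /eqP E1 /eqP E2 /eqP E3.
    by move: Hi; rewrite E1 E2 E3 eqxx.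
  have [p Hp] := B23 (ltn_ord (ta i)) (ltn_ord (tb i)) (ltn_ord (tc i)) Hi.
  by exists (i, p); rewrite /lab /bl /= Hai eqxx.
have Hne' : ~ (a = b /\ b = c) by move=> [E1 E2]; move: Hn; rewrite E1 E2 !eqxx.
have [i Hi] := outer_good Hne'.
have [p Hp] := BG (Aval_lt3 a i) (Aval_lt3 b i) (Aval_lt3 c i) Hi
  (ltn_ord (ta i)) (ltn_ord (tb i)) (ltn_ord (tc i)).
by exists (i, p).
Qed.

Definition T (n : nat) : {set 'rV['F_3]_6} :=
  if n == 0%N then Tl El else if n == 1%N then Tl Pl else Tl Ql.

Lemma capE : capb El. Proof. by vm_compute. Qed.
Lemma capP_ : capb Pl. Proof. by vm_compute. Qed.
Lemma capQ : capb Ql. Proof. by vm_compute. Qed.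
Lemma zEEP : zf (Tl El) (Tl El) (Tl Pl). Proof. by apply: zf_of; vm_compute. Qed.
Lemma zEEQ : zf (Tl El) (Tl El) (Tl Ql). Proof. by apply: zf_of; vm_compute. Qed.
Lemma zEPQ : zf (Tl El) (Tl Pl) (Tl Ql). Proof. by apply: zf_of; vm_compute. Qed.
Global Opaque El Pl Ql.

Lemma Tcap n : capP (T n).
Proof.
rewrite /T; case: ifP => _; first exact: cap_of capE.
case: ifP => _; [exact: cap_of capP_ | exact: cap_of capQ].
Qed.

Lemma zf_good p q r : (p < 3)%N -> (q < 3)%N -> (r < 3)%N -> goodn p q r ->
  zf (T p) (T q) (T r).
Proof.
case: p => [|[|[|p]]] // _; case: q => [|[|[|q]]] // _; case: r => [|[|[|r]]] // _;
  rewrite /goodn //=; rewrite /T /= => _.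
- exact: zEEP.
- exact: zEEQ.
- exact: zf23 zEEP.
- exact: zEPQ.
- exact: zf23 zEEQ.
- exact: zf23 zEPQ.
- exact: zf12 (zf23 zEEP).
- exact: zf12 zEPQ.
- exact: zf23 (zf12 zEPQ).
- exact: zf12 (zf23 zEEQ).
- exact: zf12 (zf23 zEPQ).
- exact: zf23 (zf12 (zf23 zEPQ)).
Qed.


Lemma card_nth n (s : seq nat) (P : pred nat) : size s = n ->
  #|[pred i : 'I_n | P (nth 0%N s i)]| = count P s.
Proof.
move=> Hs; rewrite -sum1_count (big_nth 0%N) Hs big_mkord -sum1_card.
by apply: eq_bigl => i.
Qed.

Lemma zeros4 (a : 'I_330) : #|[pred i : 'I_11 | Aval a i == 0%N]| = 4.
Proof.
rewrite (card_nth (fun v => v == 0%N) (sizeA a)).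
have /andP[_ /allP H] := shape_okT.
by have /andP[_ H4] := H _ (memA a); apply/eqP.
Qed.

Lemma innerb0 (t j : nat) : (innerb t j == 0%N) = (j == t).
Proof. rewrite /innerb; case: (j == t) => //; by case: (t < j)%N. Qed.

Lemma prodP (J : finType) (P : pred J) (c : nat) :
  (\prod_(j | P j) c = c ^ #|[pred j | P j]|)%N.
Proof. by rewrite -prod_nat_const. Qed.

Lemma prod_inner (e q : nat) (t : 'I_6) :
  (\prod_(j < 6) (if innerb t j == 0%N then e else q) = e * q ^ 5)%N.
Proof.
rewrite (bigD1 t) //= innerb0 eqxx; congr (_ * _)%N.
rewrite (eq_bigr (fun _ => q)) => [|j Hj]; last first.
  by rewrite innerb0 (_ : (j == t :> nat) = false) //; exact: negbTE Hj.
by rewrite prodP cardC1 card_ord.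
Qed.

Lemma prod_lab (e q : nat) x : x \in Ind ->
  (\prod_(k : I) (if lab x k == 0%N then e else q) = e ^ 4 * q ^ 62)%N.
Proof.
case: x => a t; rewrite inE => /forallP Ht.
have -> : (\prod_(k : I) (if lab (a, t) k == 0%N then e else q) =
    \prod_(i < 11) \prod_(j < 6) (if lab (a, t) (i, j) == 0%N then e else q))%N.
  by rewrite pair_big; apply: eq_bigr => -[i j].
rewrite (eq_bigr (fun i => if Aval a i == 0%N then e * q ^ 5 else q ^ 6)%N); last first.
  move=> i _; rewrite /lab /bl /=; case: (eqVneq (Aval a i) 0%N) => H.
    exact: prod_inner.
  rewrite (eq_bigr (fun _ => q)) => [|j _]; last by case: ifP => // /eqP E; rewrite E eqxx in H.
  by rewrite prodP card_ord.
rewrite (bigID (fun i => Aval a i == 0%N)) /=.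
rewrite (eq_bigr (fun _ => e * q ^ 5)%N) => [|i ->] //.
rewrite [X in (_ * X)%N](eq_bigr (fun _ => q ^ 6)%N) => [|i Hi]; last first.
  by case: ifP => // E; rewrite E in Hi.
rewrite !prodP zeros4.
have -> : #|[pred i : 'I_11 | Aval a i != 0%N]| = 7.
  have HC := cardC [pred i : 'I_11 | Aval a i == 0%N]; rewrite card_ord zeros4 in HC.
  have -> : #|[pred i : 'I_11 | Aval a i != 0%N]| = #|[predC [pred i : 'I_11 | Aval a i == 0%N]]|.
    by apply: eq_card.
  by apply/eqP; rewrite -(eqn_add2l 4) HC.
by rewrite expnMn -!expnM -mulnA -expnD.
Qed.

Lemma uniqE : uniq El. Proof. by vm_compute. Qed.
Lemma uniqP_ : uniq Pl. Proof. by vm_compute. Qed.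
Lemma uniqQ : uniq Ql. Proof. by vm_compute. Qed.
Lemma sizeE : size El = 12. Proof. by vm_compute. Qed.
Lemma sizeP : size Pl = 112. Proof. by vm_compute. Qed.
Lemma sizeQ : size Ql = 112. Proof. by vm_compute. Qed.

Lemma card_T n : #|T n| = (if n == 0%N then 12 else 112)%N.
Proof.
rewrite /T; case: ifP => _; first by rewrite card_Tl ?uniqE ?sizeE.
by case: ifP => _; rewrite card_Tl ?uniqP_ ?uniqQ ?sizeP ?sizeQ.
Qed.

Lemma lab_lt3 x k : (lab x k < 3)%N.
Proof.
rewrite /lab /bl; case: ifP => _; last exact: Aval_lt3.
by rewrite /innerb; case: ifP => //; case: ifP.
Qed.

Lemma goodT (x y z : X) : x \in Ind -> y \in Ind -> z \in Ind -> ~ (x = y /\ y = z) ->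
  exists k : I, zf (T (lab x k)) (T (lab y k)) (T (lab z k)).
Proof.
move=> Hx Hy Hz Hn; have [k Hk] := lab_good Hx Hy Hz Hn.
by exists k; apply: zf_good => //; apply: lab_lt3.
Qed.

Definition CapS := Cap Ind lab T.

Lemma CapS_cap f g h : f \in CapS -> g \in CapS -> h \in CapS -> f + g + h = 0 ->
  f = g /\ g = h.
Proof. have H := @Cap_cap _ _ _ Ind lab T Tcap goodT. exact: H. Qed.

Lemma card_Ind : #|Ind| = (330 * 6 ^ 4)%N.
Proof.
rewrite -sum1_card.
have -> : (\sum_(x in Ind) 1 = \sum_(a : 'I_330) \sum_(t | (a, t) \in Ind) 1)%N.
  by rewrite pair_big_dep; apply: eq_bigl => -[a t].
rewrite (eq_bigr (fun _ => 6 ^ 4)%N) ?sum_nat_const ?card_ord // => a _.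
pose S i : {set 'I_6} := if Aval a i == 0%N then setT else [set ord0].
have -> : (\sum_(t | (a, t) \in Ind) 1 =
    #|[set t : {ffun 'I_11 -> 'I_6} | [forall i, t i \in S i]]|)%N.
  rewrite -sum1_card; apply: eq_bigl => t; rewrite !inE /=.
  apply: eq_forallb => i; rewrite /S; case: ifP => H; rewrite ?inE ?H //=.
rewrite card_ffset.
rewrite (eq_bigr (fun i => if Aval a i == 0%N then 6 else 1)%N); last first.
  by move=> i _; rewrite /S; case: ifP => _; rewrite ?cardsT ?card_ord ?cards1.
rewrite (bigID (fun i => Aval a i == 0%N)) /=.
rewrite (eq_bigr (fun _ => 6)%N) => [|i ->] //.
rewrite [X in (_ * X)%N](eq_bigr (fun _ => 1)%N) => [|i Hi]; last first.
  by case: ifP => // E; rewrite E in Hi.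
by rewrite !prodP zeros4 exp1n muln1.
Qed.

Lemma card_CapS : #|CapS| = (330 * 6 ^ 4 * (12 ^ 4 * 112 ^ 62))%N.
Proof.
rewrite /CapS (card_Cap char3R goodT).
rewrite (eq_bigr (fun _ => 12 ^ 4 * 112 ^ 62)%N); last first.
  move=> x Hx; rewrite /Bx card_box.
  rewrite (eq_bigr (fun k => if lab x k == 0%N then 12 else 112)%N); last by move=> k _; rewrite card_T.
  exact: prod_lab.
by rewrite sum_nat_const card_Ind.
Qed.


Definition blk (k : 'I_396) : I := (inord (k %/ 36), inord ((k %/ 6) %% 6)).
Definition dig (k : 'I_396) : 'I_6 := inord (k %% 6).
Definition Phi (f : {ffun I -> 'rV['F_3]_6}) : 'rV['F_3]_396 :=
  \row_k (f (blk k)) 0 (dig k).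

Lemma PhiD f g : Phi (f + g) = Phi f + Phi g.
Proof. by apply/rowP => k; rewrite !mxE ffunE mxE. Qed.
Lemma Phi0 : Phi 0 = 0.
Proof. by apply/rowP => k; rewrite !mxE ffunE mxE. Qed.

Lemma Phi_inj : injective Phi.
Proof.
move=> f g E; apply/ffunP => -[i j]; apply/rowP => d.
have Hi := ltn_ord i; have Hj := ltn_ord j; have Hd := ltn_ord d.
have Hk : (36 * i + 6 * j + d < 396)%N by lia.
have := congr1 (fun M : 'rV['F_3]_396 => M 0 (Ordinal Hk)) E; rewrite !mxE.
have -> : blk (Ordinal Hk) = (i, j).
  rewrite /blk /=; congr pair; apply/val_inj; rewrite /= inordK; lia.
have -> : dig (Ordinal Hk) = d.
  rewrite /dig /=; apply/val_inj; rewrite /= inordK; lia.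
by [].
Qed.


Local Close Scope ring_scope.

Theorem theorem2p15 :
  exists A : {set F3n 396},
    is_cap_set A /\ #|A| = ('C(11, 7) * 6 ^ 4 * 12 ^ 4 * 112 ^ 62)%N.
Proof.
exists (Phi @: CapS); split.
  move=> x y z /imsetP[f Hf ->] /imsetP[g Hg ->] /imsetP[h Hh ->] E.
  have E' : (f + g + h = 0)%R by apply: Phi_inj; rewrite !PhiD Phi0.
  by have [-> ->] := CapS_cap Hf Hg Hh E'.
rewrite card_imset; last exact: Phi_inj.
have HC : 'C(11, 7) = 330%N by [].
rewrite card_CapS.
rewrite HC.
exact: (mulnA (330 * 6 ^ 4)%N (12 ^ 4)%N (112 ^ 62)%N).
Qed.
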